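(* Let $f$ be as in the standing setting and satisfy quadratic functional growth with constant $\kappa_f>0$: $f(x)-f^*\ge\frac{\kappa_f}{2}\|x-\bar x\|^2$ for all $x\in X$. Let $x^0\in X$ and $x^{k+1}=[x^k-\frac1{L_f}\nabla f(x^k)]_X$ for $k\ge0$, and $\bar x^k=[x^k]_{X^*}$. Then, with $\mu_f=\kappa_f/L_f$, $$\|x^k-\bar x^k\|^2\le\left(\frac{1}{1+\mu_f}\right)^k\|x^0-\bar x^0\|^2\qquad\forall k\ge0.$$
   Context: Standing setting: $X\subseteq\mathbb{R}^n$ is a nonempty closed convex set; $f:X\to\mathbb{R}$ is convex and continuously differentiable, with $L_f$-Lipschitz continuous gradient on $X$ ($L_f>0$). Consider $f^*=\min_{x\in X}f(x)$ with optimal set $X^*$ nonempty and closed and $f^*$ finite. $\|\cdot\|$ is the Euclidean norm, $[u]_S$ is the Euclidean projection onto a closed convex set $S$, and $\bar x=[x]_{X^*}$. *)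

(* Defs.v *)
From mathcomp Require Import ssreflect ssrbool eqtype ssrnat fintype bigop.
From Stdlib Require Import Reals.
Open Scope R_scope.

Definition vec (n : nat) := 'I_n -> R.

Definition vadd {n} (u v : vec n) : vec n := fun i => u i + v i.
Definition vsub {n} (u v : vec n) : vec n := fun i => u i - v i.
Definition vscale {n} (a : R) (u : vec n) : vec n := fun i => a * u i.

Definition inner {n} (u v : vec n) : R := \big[Rplus/0]_(i < n) (u i * v i).
Definition norm {n} (u : vec n) : R := sqrt (inner u u).

Definition convex_vset {n} (S : vec n -> Prop) : Prop :=
  forall x y t, S x -> S y -> 0 <= t <= 1 ->
    S (vadd (vscale t x) (vscale (1 - t) y)).

Definition closed_vset {n} (S : vec n -> Prop) : Prop :=
  forall x, (forall eps, 0 < eps -> exists y, S y /\ norm (vsub x y) < eps) -> S x.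

Definition convex_on {n} (S : vec n -> Prop) (f : vec n -> R) : Prop :=
  forall x y t, S x -> S y -> 0 <= t <= 1 ->
    f (vadd (vscale t x) (vscale (1 - t) y)) <= t * f x + (1 - t) * f y.

Definition has_gradient_at {n} (f : vec n -> R) (x gx : vec n) : Prop :=
  forall eps, 0 < eps -> exists delta, 0 < delta /\
    forall y, norm (vsub y x) < delta ->
      Rabs (f y - f x - inner gx (vsub y x)) <= eps * norm (vsub y x).

Definition is_proj {n} (S : vec n -> Prop) (x y : vec n) : Prop :=
  S y /\ forall z, S z -> norm (vsub x y) <= norm (vsub x z).

(* Main.v *)
From HB Require Import structures.
From Coquelicot Require Import Coquelicot.
Require Import Defs.
From mathcomp Require Import ssreflect ssrbool eqtype ssrnat fintype bigop.
From Stdlib Require Import Reals Lra Psatz FunctionalExtensionality.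
Open Scope R_scope.

Lemma RplusA : ssrfun.associative Rplus.
Proof. move=> a b c; ring. Qed.
HB.instance Definition _ := Monoid.isComLaw.Build R 0 Rplus RplusA Rplus_comm Rplus_0_l.

Section V.
Context {n : nat}.
Implicit Types u v w : vec n.

Lemma inner_sym u v : inner u v = inner v u.
Proof. rewrite /inner; apply: eq_bigr => i _; ring. Qed.

Lemma inner_addl u v w : inner (vadd u v) w = inner u w + inner v w.
Proof. rewrite /inner -big_split /=; apply: eq_bigr => i _; rewrite /vadd; ring. Qed.

Lemma inner_scalel a u w : inner (vscale a u) w = a * inner u w.
Proof.
rewrite /inner; apply: (big_rec2 (fun y1 y2 => y1 = a * y2)); first ring.
move=> i y1 y2 _ ->; rewrite /vscale; ring.
Qed.

Lemma inner_subl u v w : inner (vsub u v) w = inner u w - inner v w.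
Proof.
have -> : vsub u v = vadd u (vscale (-1) v).
  by apply: functional_extensionality => i; rewrite /vsub /vadd /vscale; ring.
rewrite inner_addl inner_scalel; ring.
Qed.

Lemma inner_addr u v w : inner w (vadd u v) = inner w u + inner w v.
Proof. by rewrite inner_sym inner_addl !(inner_sym w). Qed.
Lemma inner_scaler a u w : inner w (vscale a u) = a * inner w u.
Proof. by rewrite inner_sym inner_scalel !(inner_sym w). Qed.
Lemma inner_subr u v w : inner w (vsub u v) = inner w u - inner w v.
Proof. by rewrite inner_sym inner_subl !(inner_sym w). Qed.

Lemma inner_ge0 u : 0 <= inner u u.
Proof.
rewrite /inner; apply: (big_ind (fun y => 0 <= y)); [lra | move=> *; lra | ].
move=> i _; nra.
Qed.

Lemma norm_sq u : norm u ^ 2 = inner u u.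
Proof. rewrite /norm /= Rmult_1_r sqrt_sqrt //; exact: inner_ge0. Qed.

Lemma norm_ge0 u : 0 <= norm u.
Proof. exact: sqrt_pos. Qed.

Lemma norm_le_inner u v : norm u <= norm v -> inner u u <= inner v v.
Proof.
move=> H; rewrite -!norm_sq; have := norm_ge0 u; have := norm_ge0 v; nra.
Qed.

Lemma inner_le_norm u v : inner u u <= inner v v -> norm u <= norm v.
Proof. move=> H; apply: sqrt_le_1_alt => //. Qed.

Lemma norm_scale a u : norm (vscale a u) = Rabs a * norm u.
Proof.
rewrite /norm inner_scalel inner_scaler -Rmult_assoc sqrt_mult.
- by rewrite -Rsqr_def sqrt_Rsqr_abs.
- by apply: Rle_0_sqr.
- exact: inner_ge0.
Qed.

Lemma inner_expand u v a : inner (vsub u (vscale a v)) (vsub u (vscale a v)) =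
  inner u u - 2 * a * inner u v + a ^ 2 * inner v v.
Proof.
rewrite !inner_subl !inner_subr !inner_scalel !inner_scaler (inner_sym v u); ring.
Qed.

Lemma proj_char (X : vec n -> Prop) v p z : convex_vset X -> is_proj X v p -> X z ->
  inner (vsub v p) (vsub z p) <= 0.
Proof.
move=> Hcv [Hp Hmin] Hz.
set a := inner (vsub v p) (vsub z p).
set b := inner (vsub z p) (vsub z p).
have Hb : 0 <= b by exact: inner_ge0.
have key : forall t, 0 < t <= 1 -> 2 * a <= t * b.
  move=> t [Ht0 Ht1].
  have Hzt := Hcv z p t Hz Hp (conj (Rlt_le _ _ Ht0) Ht1).
  have H := norm_le_inner _ _ (Hmin _ Hzt).
  have E : vsub v (vadd (vscale t z) (vscale (1 - t) p)) = vsub (vsub v p) (vscale t (vsub z p)).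
    by apply: functional_extensionality => i; rewrite /vsub /vadd /vscale; ring.
  rewrite E inner_expand -/a -/b in H.
  nra.
apply: Rnot_lt_le => Ha.
set t := a / (a + b + 1).
have Et : t * (a + b + 1) = a by rewrite /t; field; lra.
have Ht0 : 0 < t by rewrite /t; apply: Rdiv_lt_0_compat; lra.
have Ht : 0 < t <= 1 by split; nra.
have := key _ Ht.
nra.
Qed.

Lemma vsub_seg (x y : vec n) t : vsub (vadd (vscale t y) (vscale (1 - t) x)) x = vscale t (vsub y x).
Proof. by apply: functional_extensionality => i; rewrite /vsub /vadd /vscale; ring. Qed.

Lemma grad_ineq (X : vec n -> Prop) f (x y gx : vec n) : convex_on X f -> has_gradient_at f x gx ->
  X x -> X y -> f x + inner gx (vsub y x) <= f y.
Proof.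
move=> Hcv Hg Hx Hy.
set d := vsub y x.
have Nd := norm_ge0 d.
apply: Rnot_lt_le => Hc.
set D := f x + inner gx d - f y.
have HD : 0 < D by rewrite /D; lra.
have [delta [Hdel Hd]] := Hg (D / (2 * (norm d + 1))) ltac:(apply: Rdiv_lt_0_compat; lra).
set t := delta / (2 * (norm d + 1)) / 2.
have Ht0 : 0 < t by rewrite /t; apply: Rdiv_lt_0_compat; [apply: Rdiv_lt_0_compat|]; lra.
have Ht1 : t * (2 * (norm d + 1)) = delta / 2 by rewrite /t; field; lra.
have Hdd : 0 <= D / (2 * (norm d + 1)) by left; apply: Rdiv_lt_0_compat; lra.
have ED : D / (2 * (norm d + 1)) * (2 * (norm d + 1)) = D by field; lra.
set s := Rmin t (1/2).
have Hs0 : 0 < s by apply: Rmin_pos; lra.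
have Hs1 : s <= t by apply: Rmin_l.
have Hs2 : s <= 1/2 by apply: Rmin_r.
have Hs3 : 0 <= s <= 1 by lra.
have Es : Rabs s = s by apply: Rabs_pos_eq; lra.
have Hconv := Hcv y x s Hy Hx Hs3.
have Hn : norm (vsub (vadd (vscale s y) (vscale (1 - s) x)) x) < delta.
  rewrite vsub_seg norm_scale Es -/d. nra.
have := Hd _ Hn.
rewrite vsub_seg norm_scale Es -/d.
rewrite inner_scaler => Habs.
have := Rle_abs (- (f (vadd (vscale s y) (vscale (1 - s) x)) - f x - s * inner gx d)).
rewrite Rabs_Ropp => Habs2.
set e := D / (2 * (norm d + 1)) in Hdd ED Habs Habs2.
(* s*inner - e s |d| <= f z - f x <= s (f y - f x) => D <= e |d| *)
have : s * D <= s * (e * norm d) by rewrite /D; nra.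
move=> H1.
have H2 : D <= e * norm d by nra.
nra.
Qed.

Lemma dir_deriv f (x d gz : vec n) t0 :
  has_gradient_at f (vadd x (vscale t0 d)) gz ->
  derivable_pt_lim (fun t => f (vadd x (vscale t d))) t0 (inner gz d).
Proof.
move=> Hg eps Heps.
have Nd := norm_ge0 d.
have He' : 0 < eps / 2 / (norm d + 1) by apply: Rdiv_lt_0_compat; lra.
have [delta [Hdel Hd]] := Hg _ He'.
have Hdp : 0 < delta / (norm d + 1) by apply: Rdiv_lt_0_compat; lra.
exists (mkposreal _ Hdp) => h Hh /= Hhd.
have E : vsub (vadd x (vscale (t0 + h) d)) (vadd x (vscale t0 d)) = vscale h d.
  by apply: functional_extensionality => i; rewrite /vsub /vadd /vscale; ring.
have Ehd : Rabs h * (norm d + 1) < delta.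
  have := Rmult_lt_compat_r (norm d + 1) _ _ ltac:(lra) Hhd.
  have -> : delta / (norm d + 1) * (norm d + 1) = delta by field; lra.
  done.
have Hn : norm (vsub (vadd x (vscale (t0 + h) d)) (vadd x (vscale t0 d))) < delta.
  rewrite E norm_scale; have := Rabs_pos h; nra.
have := Hd _ Hn.
rewrite E norm_scale inner_scaler.
set A := f (vadd x (vscale (t0 + h) d)) - f (vadd x (vscale t0 d)).
set e' := eps / 2 / (norm d + 1).
have Ee : e' * (norm d + 1) = eps / 2 by rewrite /e'; field; lra.
move=> H.
have Hh0 : 0 < Rabs h by apply: Rabs_pos_lt.
have EQ : A / h - inner gz d = (A - h * inner gz d) / h by field.
rewrite EQ Rabs_div //.
set X0 := Rabs (A - h * inner gz d) in H *.
have Eq : X0 / Rabs h * Rabs h = X0 by field; lra.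
have H2 : X0 <= e' * (Rabs h * norm d) by lra.
have H3 : e' * (Rabs h * norm d) < eps * Rabs h.
  have : e' * norm d < eps by nra.
  nra.
nra.
Qed.

Lemma inner_cs_le (u v : vec n) a : 0 < a -> inner u u <= a ^ 2 * inner v v ->
  inner u v <= a * inner v v.
Proof.
move=> Ha H.
have := inner_ge0 (vsub u (vscale a v)); rewrite inner_expand => H2.
nra.
Qed.

Lemma descent (X : vec n -> Prop) f g L (x y : vec n) : convex_vset X ->
  (forall z, X z -> has_gradient_at f z (g z)) -> 0 < L ->
  (forall u v, X u -> X v -> norm (vsub (g u) (g v)) <= L * norm (vsub u v)) ->
  X x -> X y ->
  f y <= f x + inner (g x) (vsub y x) + L / 2 * inner (vsub y x) (vsub y x).
Proof.
move=> Hcv Hg HL HLip Hx Hy.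
set d := vsub y x.
set A := inner (g x) d.
set B := L / 2 * inner d d.
set p := fun t => vadd x (vscale t d).
have Hp : forall t, 0 <= t <= 1 -> X (p t).
  move=> t Ht.
  have -> : p t = vadd (vscale t y) (vscale (1 - t) x).
    by apply: functional_extensionality => i; rewrite /p /d /vsub /vadd /vscale; ring.
  exact: Hcv.
set phi := fun t => f (p t) - (t * A + B * (t * t)).
set phi' := fun t => inner (g (p t)) d - (A + B * (2 * t)).
have Hd : forall c, 0 <= c <= 1 -> derivable_pt_lim phi c (phi' c).
  move=> c Hc.
  apply: (derivable_pt_lim_minus (fun t => f (p t)) (fun t => t * A + B * (t * t))).
    exact: dir_deriv (Hg _ (Hp _ Hc)).
  apply/is_derive_Reals.
  auto_derive => //. ring.
have [c [Hc1 Hc2]] := MVT_cor2 phi phi' 0 1 Rlt_0_1 Hd.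
have Ep1 : p 1 = y.
  by apply: functional_extensionality => i; rewrite /p /d /vsub /vadd /vscale; ring.
have Ep0 : p 0 = x.
  by apply: functional_extensionality => i; rewrite /p /d /vsub /vadd /vscale; ring.
have Hneg : phi' c <= 0.
  rewrite /phi'.
  have Ew : inner (g (p c)) d - A = inner (vsub (g (p c)) (g x)) d by rewrite inner_subl.
  have Hpc : vsub (p c) x = vscale c d.
    by apply: functional_extensionality => i; rewrite /p /vsub /vadd /vscale; ring.
  have Hc01 : 0 <= c <= 1 by lra.
  have Hl := HLip _ _ (Hp c Hc01) Hx.
  rewrite Hpc norm_scale Rabs_pos_eq in Hl; last lra.
  have Hw : inner (vsub (g (p c)) (g x)) (vsub (g (p c)) (g x)) <= (L * c) ^ 2 * inner d d.
    rewrite -!norm_sq.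
    have := norm_ge0 (vsub (g (p c)) (g x)); have := norm_ge0 d.
    have : 0 <= L * c by nra.
    nra.
  have HLc : 0 < L * c by nra.
  have := inner_cs_le _ _ _ HLc Hw.
  rewrite /B; lra.
rewrite /phi Ep1 Ep0 in Hc1.
rewrite -/d -/A.
rewrite /B in Hc1 *.
nra.
Qed.
End V.

Lemma key_step {n} (X : vec n -> Prop) f g L fstar (x y xp : vec n) :
  convex_vset X -> convex_on X f ->
  (forall z, X z -> has_gradient_at f z (g z)) -> 0 < L ->
  (forall u v, X u -> X v -> norm (vsub (g u) (g v)) <= L * norm (vsub u v)) ->
  X x -> X y -> f y = fstar ->
  is_proj X (vsub x (vscale (1 / L) (g x))) xp ->
  f xp - fstar <= L / 2 * (inner (vsub x y) (vsub x y) - inner (vsub xp y) (vsub xp y)).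
Proof.
move=> Hcv Hfcv Hg HL HLip Hx Hy Hfy Hpr.
have Hxp : X xp by case: Hpr.
have H1 := descent _ _ _ _ _ _ Hcv Hg HL HLip Hx Hxp.
have H2 := grad_ineq _ _ _ _ _ Hfcv (Hg _ Hx) Hx Hy.
have H3 := proj_char _ _ _ _ Hcv Hpr Hy.
move: H1 H2 H3.
rewrite !inner_subl !inner_subr ?inner_scalel ?inner_scaler ?inner_subl ?inner_subr.
rewrite (inner_sym xp x) (inner_sym y x) (inner_sym y xp) (inner_sym (g x) x)
  (inner_sym (g x) xp) (inner_sym (g x) y).
move=> H1 H2 H3.
have E : L * (1 / L) = 1 by field; lra.
set a := 1 / L in H3 E.
rewrite -Hfy.
have H4 : L * (inner x y - inner x xp - (a * inner y (g x) - a * inner xp (g x)) -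
    (inner xp y - inner xp xp)) <= 0.
  by apply: Rmult_le_0_l => //; lra.
have E2 : L * (inner x y - inner x xp - (a * inner y (g x) - a * inner xp (g x)) -
    (inner xp y - inner xp xp)) = L * (inner x y - inner x xp - (inner xp y - inner xp xp))
    - (L * a) * (inner y (g x) - inner xp (g x)) by ring.
rewrite E2 E in H4.
lra.
Qed.

Theorem theorem12 (n : nat) (X : vec n -> Prop) (f : vec n -> R)
  (g : vec n -> vec n) (Lf kappa fstar : R)
  (x xbar : nat -> vec n)
  (HXne : exists x0, X x0)
  (HXcl : closed_vset X) (HXcv : convex_vset X)
  (Hfcv : convex_on X f)
  (Hgrad : forall x, X x -> has_gradient_at f x (g x))
  (HgC : forall x, X x -> forall eps, 0 < eps -> exists delta, 0 < delta /\
           forall y, X y -> norm (vsub y x) < delta -> norm (vsub (g y) (g x)) < eps)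
  (HLpos : 0 < Lf)
  (HLip : forall x y, X x -> X y -> norm (vsub (g x) (g y)) <= Lf * norm (vsub x y))
  (Hfstar_lb : forall x, X x -> fstar <= f x)
  (Hstar_ne : exists xs, X xs /\ f xs = fstar)
  (Hstar_cl : closed_vset (fun z => X z /\ f z = fstar))
  (Hkpos : 0 < kappa)
  (Hqfg : forall x xb, X x -> is_proj (fun z => X z /\ f z = fstar) x xb ->
            f x - fstar >= kappa / 2 * (norm (vsub x xb)) ^ 2)
  (Hx0 : X (x 0%nat))
  (Hstep : forall k, is_proj X (vsub (x k) (vscale (1 / Lf) (g (x k)))) (x (S k)))
  (Hbar : forall k, is_proj (fun z => X z /\ f z = fstar) (x k) (xbar k)) :
  forall k : nat,
    (norm (vsub (x k) (xbar k))) ^ 2 <=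
      (1 / (1 + kappa / Lf)) ^ k * (norm (vsub (x 0%nat) (xbar 0%nat))) ^ 2.
Proof.
have HXk : forall k, X (x k).
  by case=> [|k] //; case: (Hstep k).
have Hkey : forall k, norm (vsub (x (S k)) (xbar (S k))) ^ 2 <=
    (1 / (1 + kappa / Lf)) * norm (vsub (x k) (xbar k)) ^ 2.
  move=> k.
  have [[HyX Hyf] _] := Hbar k.
  have Hks := key_step _ _ _ _ _ _ _ _ HXcv Hfcv Hgrad HLpos HLip (HXk k) HyX Hyf (Hstep k).
  have Hq := Hqfg _ _ (HXk (S k)) (Hbar (S k)).
  have Hmin : norm (vsub (x (S k)) (xbar (S k))) ^ 2 <= inner (vsub (x (S k)) (xbar k)) (vsub (x (S k)) (xbar k)).
    rewrite norm_sq; apply: norm_le_inner; case: (Hbar (S k)) => _ Hm; exact: Hm.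
  rewrite -!norm_sq in Hks Hmin.
  set d1 := norm (vsub (x (S k)) (xbar (S k))) ^ 2 in Hq Hmin *.
  set dk := norm (vsub (x k) (xbar k)) ^ 2 in Hks *.
  set e := norm (vsub (x (S k)) (xbar k)) ^ 2 in Hks Hmin.
  set m := kappa / Lf.
  have Em : m * Lf = kappa by rewrite /m; field; lra.
  have Hm0 : 0 < m by rewrite /m; apply: Rdiv_lt_0_compat.
  set r := 1 / (1 + m).
  have Er : r * (1 + m) = 1 by rewrite /r; field; lra.
  have Hr : 0 <= r by rewrite /r; left; apply: Rdiv_lt_0_compat; lra.
  have Hd1 : 0 <= d1 by rewrite /d1; apply: pow2_ge_0.
  have H1 : Lf * (m * d1 + d1 - dk) <= 0 by nra.
  have H2 : d1 * (1 + m) <= dk.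
    have : m * d1 + d1 - dk <= 0.
      apply: Rnot_lt_le => Hc; nra.
    lra.
  nra.
elim=> [|k IH]; first by rewrite pow_O; lra.
have := Hkey k.
have Hr : 0 <= 1 / (1 + kappa / Lf).
  left; apply: Rdiv_lt_0_compat; first lra.
  have : 0 < kappa / Lf by apply: Rdiv_lt_0_compat.
  lra.
rewrite /= Rmult_assoc.
move=> H; apply: (Rle_trans _ _ _ H).
apply: Rmult_le_compat_l => //.
Qed.
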